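(* Let $n$ be a positive integer and $g=3n+2$. If $G$ is a pure $(2n+1)$-sparse gapset of genus $g$, then $G$ is not symmetric.
   Context: A gapset is a finite set $G\subset\mathbb{N}=\{1,2,\dots\}$ such that whenever $z\in G$ and $z=x+y$ with $x,y\in\mathbb{N}$, then $x\in G$ or $y\in G$; its genus is $g=\#G$. Writing $G=\{\ell_1<\dots<\ell_g\}$, the Frobenius number is $F(G)=\ell_g$; $G$ is symmetric if $F(G)=2g-1$. $G$ is pure $\kappa$-sparse if $\ell_{i+1}-\ell_i\le\kappa$ for all $i$ with equality for some $i$. *)

(* Defs.v *)
From mathcomp Require Import all_boot.
Set Implicit Arguments. Unset Strict Implicit. Unset Printing Implicit Defensive.

(* A gapset is represented by the strictly increasing list of its elements
   G = [:: l_1; ...; l_g] (so the list determines the finite set, and the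
   genus is its size). *)

Definition is_gapset (G : seq nat) : Prop :=
  sorted ltn G /\ (forall z, z \in G -> 0 < z) /\
  (forall x y, 0 < x -> 0 < y -> x + y \in G -> x \in G \/ y \in G).

Definition genus (G : seq nat) : nat := size G.

(* Frobenius number: largest element l_g (0 for the empty gapset). *)
Definition frobenius (G : seq nat) : nat := last 0 G.

Definition symmetric_gapset (G : seq nat) : Prop :=
  frobenius G = 2 * genus G - 1.

(* pure kappa-sparse: l_{i+1} - l_i <= kappa for all i, with equality for some i
   (indices 0-based: i ranges over 0 .. g-2). *)
Definition pure_sparse (kappa : nat) (G : seq nat) : Prop :=
  (forall i, i.+1 < size G -> nth 0 G i.+1 - nth 0 G i <= kappa) /\
  (exists i, i.+1 < size G /\ nth 0 G i.+1 - nth 0 G i = kappa).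

(* Main.v *)
Require Import Defs.
From mathcomp Require Import all_boot.
From mathcomp Require Import zify.

Lemma memnth (G : seq nat) (i : nat) : i < size G -> nth 0 G i \in G.
Proof. exact: mem_nth. Qed.

Lemma nth_mono (G : seq nat) (i j : nat) : sorted ltn G -> i < j -> j < size G ->
  nth 0 G i < nth 0 G j.
Proof.
move=> sG ij js.
apply: (sorted_ltn_nth ltn_trans 0 sG) => //; rewrite inE; lia.
Qed.

Lemma nth_between (G : seq nat) i c : sorted ltn G -> i.+1 < size G ->
  c \in G -> nth 0 G i < c -> c < nth 0 G i.+1 -> False.
Proof.
move=> sG iS cG h1 h2.
case/(nthP 0): cG => j js ej; subst c; move: h1 h2; rewrite -[Equality.sort _]/nat => h1 h2.
case: (ltngtP j i) => ji.
- have H := @nth_mono G _ _ sG ji (ltnW iS); lia.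
- case: (ltngtP j i.+1) => ji2; first lia.
  + have := @nth_mono G _ _ sG ji2 js => ?; lia.
  + subst j; lia.
- subst j; lia.
Qed.

Lemma sym_pairs (G : seq nat) g x : is_gapset G -> size G = g -> 2 <= g ->
  last 0 G = 2 * g - 1 -> 0 < x -> x < g -> x \in G -> (2 * g - 1 - x) \in G -> False.
Proof.
move=> [sG [pos gap]] sz g2 FL x0 xg xG FxG.
set F := 2 * g - 1 in FL FxG. have FE : F = 2 * g - 1 by []. clearbody F.
have FG : F \in G.
  rewrite -FL -nth_last; apply: memnth; lia.
pose h y := if y \in G then y else F - y.
have hG : forall y, 0 < y < g -> h y \in G.
  move=> y /andP[y0 yg]; rewrite /h; case: ifP => // yn.
  have := gap y (F - y) y0 ltac:(lia); rewrite subnKC; last lia.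
  by move/(_ FG); rewrite yn; case.
pose s1 := F :: (F - x) :: map h (iota 1 (g - 1)).
have hlt : forall y, 0 < y < g -> h y < F.
  move=> y /andP[y0 yg]; rewrite /h; case: ifP => _; lia.
have U : uniq s1.
  rewrite /s1 /= map_inj_in_uniq ?iota_uniq; last first.
    move=> a b; rewrite !mem_iota /h => ha hb.
    case: ifP => _; case: ifP => _; lia.
  rewrite andbT; apply/andP; split.
    rewrite inE negb_or; apply/andP; split; first by apply/eqP; lia.
    apply/mapP => [[y]]; rewrite mem_iota => hy e.
    have := hlt y ltac:(lia); lia.
  apply/mapP => [[y]]; rewrite mem_iota => hy.
  rewrite /h; case: ifP => yG e; first lia.
  have yx : y = x by lia.
  by rewrite yx xG in yG.
have S : {subset s1 <= G}.
  move=> z; rewrite /s1 !inE => /orP[/eqP -> //|/orP[/eqP -> //|]].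
  by case/mapP => y; rewrite mem_iota => hy ->; apply: hG; lia.
have := uniq_leq_size U S; rewrite /s1 /= size_map size_iota; lia.
Qed.

Theorem mainTheorem8 (n : nat) (G : seq nat) :
  0 < n -> is_gapset G -> genus G = 3 * n + 2 ->
  pure_sparse (2 * n + 1) G -> ~ symmetric_gapset G.
Proof.
move=> n0 gs; have [sG [pos gap]] := gs.
rewrite /genus => sz [sp [i [isz ieq]]]; rewrite /symmetric_gapset /frobenius /genus sz => FL.
set g := 3 * n + 2 in sz FL.
have FN : last 0 G = nth 0 G (size G).-1 by rewrite nth_last.
have FG : last 0 G \in G by rewrite FN; apply: memnth; lia.
set a := nth 0 G i in ieq.
set b := nth 0 G i.+1 in ieq.
have ab := @nth_mono G _ _ sG (ltnSn i) isz.
have bG : b \in G by apply: memnth.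
have small : forall k, 0 < k <= 2 * n -> k \in G.
  move=> k /andP[k0 kn].
  have := gap k (b - k) k0 ltac:(lia); rewrite subnKC; last lia.
  case/(_ bG) => // bkG; exfalso.
  apply: (@nth_between G i _ sG isz bkG); rewrite /a /b in ieq ab *; lia.
have m1 : 2 * n + 1 \in G.
  have := gap (2 * n + 1) (4 * n + 2) ltac:(lia) ltac:(lia).
  have -> : 2 * n + 1 + (4 * n + 2) = last 0 G by rewrite FL /g; lia.
  case/(_ FG) => // h.
  have := gap (2 * n + 1) (2 * n + 1) ltac:(lia) ltac:(lia).
  have -> : 2 * n + 1 + (2 * n + 1) = 4 * n + 2 by lia.
  by case/(_ h).
have top : forall k, 0 < k <= 2 * n + 1 -> (2 * g - 1 - k) \in G -> False.
  move=> k /andP[k0 kn] kG.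
  apply: (@sym_pairs G g k gs sz _ FL k0 _ _ kG); try lia.
  case: (ltnP k (2 * n + 1)) => kl; first by apply: small; lia.
  by have -> : k = 2 * n + 1 by lia.
have := sp (size G).-2 ltac:(lia).
have -> : (size G).-2.+1 = (size G).-1 by lia.
rewrite -FN FL.
set c := nth 0 G (size G).-2.
have cG : c \in G by apply: memnth; lia.
have cF : c < 2 * g - 1.
  rewrite -FL FN; apply: nth_mono => //; lia.
case: (leqP c (4 * n + 1)) => hc; first lia.
exfalso; apply: (top (2 * g - 1 - c)); first lia.
by have -> : 2 * g - 1 - (2 * g - 1 - c) = c by lia.
Qed.
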